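(* Let $n \geq 18$ be divisible by $3$, and let $A_n$ be the set of binary words of length $n$ that contain no $3$-antipower as a factor. Then $$A_n = \mathcal{C}_n\left(0^* \cup (01)^* \cup (01)^* 0 \cup 0^*10^* \cup 0^*011 \cup 0^*101\right).$$
   Context: Words are over $\{0,1\}$. A $3$-antipower is a word $u_1u_2u_3$ with $|u_1|=|u_2|=|u_3|$ and $u_1,u_2,u_3$ pairwise distinct; a factor is a contiguous subword. For a word $w$, $w^* = \{\varepsilon, w, w^2, \dots\}$, and sets of words are written as regular expressions (concatenation of sets, union). For a language $L \subseteq \{0,1\}^*$, $\mathcal{C}_n(L)$ denotes the closure of $L \cap \{0,1\}^n$ under bitwise complementation (exchanging $0$ and $1$) and reversal; i.e., it consists of all length-$n$ words of $L$, their bitwise complements, their reversals, and the bitwise complements of their reversals. *)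

(* Defs.v *)
From mathcomp Require Import all_boot.
Set Implicit Arguments. Unset Strict Implicit. Unset Printing Implicit Defensive.

(* Binary words: seq bool, with letter 0 = false and letter 1 = true. *)
Definition word := seq bool.

Definition factor (u w : word) : Prop := exists p s : word, w = p ++ u ++ s.

Definition antipower3 (v : word) : Prop :=
  exists u1 u2 u3 : word, v = u1 ++ u2 ++ u3 /\
    size u1 = size u2 /\ size u2 = size u3 /\
    u1 <> u2 /\ u1 <> u3 /\ u2 <> u3.

Definition A (n : nat) (w : word) : Prop :=
  size w = n /\ ~ (exists v, factor v w /\ antipower3 v).

Definition wpow (u : word) (k : nat) : word := flatten (nseq k u).

Definition L (w : word) : Prop :=
     (exists k, w = wpow [:: false] k)
  \/ (exists k, w = wpow [:: false; true] k)
  \/ (exists k, w = wpow [:: false; true] k ++ [:: false])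
  \/ (exists i j, w = wpow [:: false] i ++ [:: true] ++ wpow [:: false] j)
  \/ (exists k, w = wpow [:: false] k ++ [:: false; true; true])
  \/ (exists k, w = wpow [:: false] k ++ [:: true; false; true]).

Definition compl (w : word) : word := map negb w.

Definition Cn (P : word -> Prop) (n : nat) (w : word) : Prop :=
  exists v, P v /\ size v = n /\
    (w = v \/ w = compl v \/ w = rev v \/ w = compl (rev v)).

(* Main.v *)
Require Import Defs.
From mathcomp Require Import all_boot.
From mathcomp Require Import zify.
Set Implicit Arguments. Unset Strict Implicit. Unset Printing Implicit Defensive.
Set Warnings "-notation-overridden".

Definition bad (w : word) : Prop := exists v, factor v w /\ antipower3 v.

Definition apb (v : word) : bool :=
  let l := size v %/ 3 in
  [&& size v == 3 * l, take l v != take l (drop l v),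
      take l v != drop (2 * l) v & take l (drop l v) != drop (2 * l) v].

Lemma ap_apb v : antipower3 v <-> apb v.
Proof.
split.
- move=> [u1 [u2 [u3 [-> [s12 [s23 [n12 [n13 n23]]]]]]]].
  rewrite /apb !size_cat -s23 -s12.
  have -> : (size u1 + (size u1 + size u1)) %/ 3 = size u1 by lia.
  rewrite take_size_cat // drop_size_cat // take_size_cat ?s12 //.
  have -> : drop (2 * size u2) (u1 ++ u2 ++ u3) = u3.
    by rewrite mul2n -addnn -drop_drop drop_size_cat // drop_size_cat.
  apply/and4P; split.
  + by apply/eqP; lia.
  + by apply/eqP.
  + by apply/eqP.
  + by apply/eqP.
- case/and4P=> /eqP hs /eqP n12 /eqP n13 /eqP n23.
  move: hs n12 n13 n23; set l := size v %/ 3 => hs n12 n13 n23.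
  exists (take l v), (take l (drop l v)), (drop (2 * l) v).
  have hl : l <= size v by lia.
  split.
    by rewrite mul2n -addnn -drop_drop !cat_take_drop.
  rewrite size_take size_takel ?size_drop; last lia.
  have -> : (if l < size v then l else size v) = l by case: ltnP; lia.
  split; first by [].
  split; first by lia.
  by [].
Qed.

Lemma bad_ap v : antipower3 v -> bad v.
Proof. by move=> h; exists v; split=> //; exists [::], [::]; rewrite cats0. Qed.

Lemma bad_apb v : apb v -> bad v.
Proof. by move/ap_apb/bad_ap. Qed.

Lemma bad_suf p s : bad s -> bad (p ++ s).
Proof. by move=> [v [[a [b ->]] h]]; exists v; split=> //; exists (p ++ a), b; rewrite catA. Qed.

Lemma bad_pre p s : bad p -> bad (p ++ s).
Proof. by move=> [v [[a [b ->]] h]]; exists v; split=> //; exists a, (b ++ s); rewrite -!catA. Qed.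

Lemma bad_mid p v s : bad v -> bad (p ++ v ++ s).
Proof. by move=> h; apply: bad_suf; apply: bad_pre. Qed.

Lemma complK w : compl (compl w) = w.
Proof. by rewrite /compl -map_comp map_id_in // => x _ /=; rewrite negbK. Qed.

Lemma compl_cat x y : compl (x ++ y) = compl x ++ compl y.
Proof. by rewrite /compl map_cat. Qed.

Lemma compl_inj : injective compl.
Proof. by move=> x y h; rewrite -(complK x) h complK. Qed.

Lemma size_compl w : size (compl w) = size w.
Proof. by rewrite size_map. Qed.

Lemma ap_compl v : antipower3 v -> antipower3 (compl v).
Proof.
move=> [u1 [u2 [u3 [-> [s12 [s23 [n12 [n13 n23]]]]]]]].
exists (compl u1), (compl u2), (compl u3); rewrite !compl_cat !size_compl.
split; first by [].
by do !split=> //; move/compl_inj.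
Qed.

Lemma bad_compl w : bad w -> bad (compl w).
Proof.
move=> [v [[a [b ->]] h]]; exists (compl v); split; last exact: ap_compl.
by exists (compl a), (compl b); rewrite !compl_cat.
Qed.

Lemma bad_complE w : bad (compl w) <-> bad w.
Proof. by split=> [/bad_compl|/bad_compl//]; rewrite complK. Qed.

Lemma ap_rev v : antipower3 v -> antipower3 (rev v).
Proof.
move=> [u1 [u2 [u3 [-> [s12 [s23 [n12 [n13 n23]]]]]]]].
exists (rev u3), (rev u2), (rev u1); rewrite !rev_cat !size_rev catA.
split; first by [].
split; first by lia.
split; first by lia.
by do !split=> //; move/(congr1 rev); rewrite !revK => /esym.
Qed.

Lemma bad_rev w : bad w -> bad (rev w).
Proof.
move=> [v [[a [b ->]] h]]; exists (rev v); split; last exact: ap_rev.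
by exists (rev b), (rev a); rewrite !rev_cat catA.
Qed.

Lemma bad_revE w : bad (rev w) <-> bad w.
Proof. by split=> [/bad_rev|/bad_rev//]; rewrite revK. Qed.

Definition badb (w : word) : bool :=
  has (fun i => has (fun j => apb (take j (drop i w))) (iota 0 (size w).+1))
      (iota 0 (size w).+1).

Lemma badb_bad w : badb w -> bad w.
Proof.
case/hasP=> i _ /hasP [j _ h]; exists (take j (drop i w)); split; last exact/ap_apb.
by exists (take i w), (drop j (drop i w)); rewrite !cat_take_drop.
Qed.

Fixpoint Lk (k : nat) : seq word :=
  match k with
  | 0 => [:: [::]]
  | k'.+1 => filter (fun w => ~~ badb w)
      (flatten (map (fun p => [:: rcons p false; rcons p true]) (Lk k')))
  end.

Lemma Lk_complete k w : size w = k -> ~ bad w -> w \in Lk k.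
Proof.
elim: k w => [|k IH] w.
  by move/eqP; rewrite size_eq0 => /eqP ->.
case/lastP: w => [//|p c]; rewrite size_rcons => -[hp] hb /=.
have hbp : ~ bad p by move=> h; apply: hb; rewrite -cats1; apply: bad_pre.
have := IH p hp hbp => hpin.
rewrite mem_filter; apply/andP; split.
  by apply/negP => /badb_bad.
apply/flattenP; exists [:: rcons p false; rcons p true]; first exact: map_f.
by case: (c) ; rewrite !inE eqxx ?orbT.
Qed.

Definition G0 (v : word) : Prop :=
  (exists k, v = nseq k false) \/
  (exists k, v = wpow [:: false; true] k) \/
  (exists k, v = wpow [:: false; true] k ++ [:: false]) \/
  (exists i j, v = nseq i false ++ true :: nseq j false) \/
  (exists j, v = nseq j false ++ [:: true; true]) \/
  (exists j, v = [:: true; true] ++ nseq j false) \/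
  (exists j, v = nseq j false ++ [:: true; false; true]) \/
  (exists j, v = [:: true; false; true] ++ nseq j false) \/
  (exists j, v = true :: nseq j false ++ [:: true]) \/
  (exists j, v = [:: true; true] ++ nseq j false ++ [:: true]) \/
  (exists j, v = true :: nseq j false ++ [:: true; true]) \/
  (exists j, v = [:: false; true] ++ nseq j false ++ [:: true]) \/
  (exists j, v = true :: nseq j false ++ [:: true; false]).

Definition G (w : word) : Prop := exists v, G0 v /\ (w = v \/ w = compl v).

Definition G0b (v : word) : bool :=
  let n := size v in let i := index true v in
  [|| v == nseq n false,
      v == wpow [:: false; true] n./2,
      v == wpow [:: false; true] n./2 ++ [:: false],
      v == nseq i false ++ true :: nseq (n - i.+1) false,
      v == nseq (n-2) false ++ [:: true; true],
      v == [:: true; true] ++ nseq (n-2) false,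
      v == nseq (n-3) false ++ [:: true; false; true],
      v == [:: true; false; true] ++ nseq (n-3) false,
      v == true :: nseq (n-2) false ++ [:: true],
      v == [:: true; true] ++ nseq (n-3) false ++ [:: true],
      v == true :: nseq (n-3) false ++ [:: true; true],
      v == [:: false; true] ++ nseq (n-3) false ++ [:: true] |
      v == true :: nseq (n-3) false ++ [:: true; false]].

Ltac solveG0 :=
  repeat (first [ left; solve [eexists; reflexivity | do 2 eexists; reflexivity] | right ]);
  eexists; reflexivity.

Lemma G0b_G0 v : G0b v -> G0 v.
Proof.
rewrite /G0b.
do 12 (case/orP; first by move/eqP => ->; solveG0).
by move/eqP => ->; solveG0.
Qed.

Definition Gb (w : word) : bool := G0b w || G0b (compl w).

Lemma Gb_G w : Gb w -> G w.
Proof.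
case/orP=> h; first by exists w; split; [exact: G0b_G0 | left].
by exists (compl w); split; [exact: G0b_G0 | right; rewrite complK].
Qed.

Lemma base18 : all Gb (Lk 18).
Proof. vm_compute. reflexivity. Qed.

Lemma base w : size w = 18 -> ~ bad w -> G w.
Proof.
move=> hs hb; apply: Gb_G; have := Lk_complete hs hb.
by move: w {hs hb}; apply/allP; exact: base18.
Qed.

Lemma nseq_split m n (a : bool) : n <= m -> nseq m a = nseq n a ++ nseq (m - n) a.
Proof. by move=> h; rewrite -nseqD subnKC. Qed.

Lemma AP (x y : word) l : true \in x -> true \in y -> size x + size y <= l ->
  antipower3 (x ++ nseq (3 * l - size x - size y) false ++ y).
Proof.
move=> hx hy hl.
have -> : nseq (3 * l - size x - size y) false =
   nseq (l - size x) false ++ nseq l false ++ nseq (l - size y) false.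
  by rewrite -!nseqD; congr nseq; lia.
exists (x ++ nseq (l - size x) false), (nseq l false), (nseq (l - size y) false ++ y).
split; first by rewrite !catA.
rewrite !size_cat !size_nseq.
split; first by lia.
split; first by lia.
split.
  move=> h; have : true \in x ++ nseq (l - size x) false by rewrite mem_cat hx.
  by rewrite h mem_nseq andbF.
split.
  move=> h; move: (congr1 (take (size x)) h).
  rewrite take_size_cat // (nseq_split (n := size x)); last by lia.
  rewrite -catA take_size_cat ?size_nseq // => ex.
  by move: hx; rewrite ex mem_nseq andbF.
move=> h; have : true \in nseq (l - size y) false ++ y by rewrite mem_cat hy orbT.
by rewrite -h mem_nseq andbF.
Qed.

Lemma LR (X Y : word) j (x y X' Y' : word) : X = X' ++ x -> Y = y ++ Y' -> true \in x -> true \in y ->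
  (size x + j + size y) %% 3 = 0 -> 3 * (size x + size y) <= size x + j + size y ->
  bad (X ++ nseq j false ++ Y).
Proof.
move=> -> -> hx hy hm hle.
set l := (size x + j + size y) %/ 3.
have hj : j = 3 * l - size x - size y by rewrite /l; lia.
have -> : (X' ++ x) ++ nseq j false ++ y ++ Y' = X' ++ (x ++ nseq j false ++ y) ++ Y'
  by rewrite !catA.
apply: bad_mid; apply: bad_ap; rewrite hj; apply: AP => //; rewrite /l; lia.
Qed.

Lemma nseq_splitr m n (a : bool) : m <= n -> nseq n a = nseq (n - m) a ++ nseq m a.
Proof. by move=> h; rewrite -nseqD subnK. Qed.

Lemma nseq_r k (a : bool) : nseq k a ++ [:: a] = nseq k.+1 a.
Proof. by rewrite -[k.+1]addn1 nseqD. Qed.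

Lemma wpowD (u : word) a b : wpow u (a + b) = wpow u a ++ wpow u b.
Proof. by rewrite /wpow nseqD flatten_cat. Qed.

Lemma wpow_r (u : word) k : wpow u k ++ u = wpow u k.+1.
Proof. by rewrite -addn1 wpowD /wpow /= cats0. Qed.

Lemma size_wpow (u : word) k : size (wpow u k) = size u * k.
Proof. by elim: k => [|k IH]; rewrite ?muln0 // -wpow_r size_cat IH mulnS addnC. Qed.

Lemma GG v : G0 v -> G v.
Proof. by move=> h; exists v; split=> //; left. Qed.

Tactic Notation "sh" int_or_var(n) := apply: GG; do n right; try left.
Ltac tb := apply: badb_bad; vm_compute; reflexivity.
Ltac lr x y X' Y' := apply: (@LR _ _ _ x y X' Y'); [by rewrite -?nseq_r -?catA|by rewrite ?cats0|by []|by []| simpl; lia | simpl; lia].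

Lemma step0 v c : G0 v -> 18 <= size v -> G (v ++ [:: c]) \/ bad (v ++ [:: c]).
Proof.
case=> [[k ->]|[[k ->]|[[k ->]|[[i [j ->]]|[[j ->]|[[j ->]|[[j ->]|[[j ->]|[[j ->]|[[j ->]|[[j ->]|[[j ->]|[j ->]]]]]]]]]]]]] hs.
- (* 0^k *)
  case: c; left.
    by sh 3; exists k, 0.
  by sh 0; exists k.+1; rewrite nseq_r.
- (* (01)^k *)
  rewrite size_wpow /= in hs.
  case: c.
    right; rewrite (_ : k = (k - 4) + 4) ?wpowD; last by lia.
    by rewrite -catA; apply: bad_suf; tb.
  by left; sh 2; exists k.
- (* (01)^k 0 *)
  rewrite size_cat size_wpow /= in hs.
  case: c.
    by left; sh 1; exists k.+1; rewrite -catA /= -wpow_r.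
  right; rewrite (_ : k = (k - 4) + 4) ?wpowD; last by lia.
  by rewrite -!catA; apply: bad_suf; tb.
- (* 0^i 1 0^j *)
  rewrite size_cat /= !size_nseq in hs.
  case: c.
  + case: i hs => [|[|i]] hs.
    * by left; sh 8; exists j.
    * by left; sh 11; exists j; rewrite -catA.
    case: j hs => [|[|[|[|[|[|[|[|j]]]]]]]] hs.
    * by left; sh 4; exists i.+2; rewrite -catA.
    * by left; sh 6; exists i.+2; rewrite -catA.
    1-6: right; rewrite (@nseq_splitr 10 i.+2); [rewrite -!catA; apply: bad_suf; tb | lia].
    right.
    have -> : (nseq i.+2 false ++ true :: nseq j.+4.+4 false) ++ [:: true] =
       (nseq i.+2 false ++ [:: true]) ++ nseq j.+4.+4 false ++ [:: true] by rewrite -!catA.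
    have hr : j.+4.+4 %% 3 < 3 by rewrite ltn_pmod.
    case hm: (j.+4.+4 %% 3) hr => [|[|[|r]]] // _.
    * by lr [:: false; true] [:: true] (nseq i.+1 false) (@nil bool).
    * by lr [:: true] [:: true] (nseq i.+2 false) (@nil bool).
    * by lr [:: false; false; true] [:: true] (nseq i false) (@nil bool).
  + by left; sh 3; exists i, j.+1; rewrite -catA /= nseq_r.
- (* 0^j 11 *)
  rewrite size_cat size_nseq /= in hs.
  right; rewrite (@nseq_splitr 3 j); last lia.
  by rewrite -!catA; apply: bad_suf; case: c; tb.
- (* 11 0^j *)
  rewrite /= size_nseq in hs.
  case: c; left.
    by sh 9; exists j.
  by sh 5; exists j.+1; rewrite /= nseq_r.
- (* 0^j 101 *)
  rewrite size_cat size_nseq /= in hs.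
  right; rewrite (@nseq_splitr 5 j); last lia.
  by rewrite -!catA; apply: bad_suf; case: c; tb.
- (* 101 0^j *)
  rewrite /= size_nseq in hs.
  case: c.
  + right; rewrite -catA.
    have hr : j %% 3 < 3 by rewrite ltn_pmod.
    case hm: (j %% 3) hr => [|[|[|r]]] // _.
    * by lr [:: false; true] [:: true] [:: true] (@nil bool).
    * by lr [:: true] [:: true] [:: true; false] (@nil bool).
    * by lr [:: true; false; true] [:: true] (@nil bool) (@nil bool).
  + by left; sh 7; exists j.+1; rewrite /= nseq_r.
- (* 1 0^j 1 *)
  left; case: c.
    by sh 10; exists j; rewrite /= -catA.
  by sh 12; exists j; rewrite /= -catA.
- (* 11 0^j 1 *)
  rewrite /= size_cat size_nseq /= in hs.
  right; rewrite -!catA.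
  have hr : j %% 3 < 3 by rewrite ltn_pmod.
  case hm: (j %% 3) hr => [|[|[|r]]] // _.
  * by lr [:: true; true] [:: true] (@nil bool) [:: c].
  * by lr [:: true] [:: true] [:: true] [:: c].
  * by lr [:: true; true] [:: true; c] (@nil bool) (@nil bool).
- (* 1 0^j 11 *)
  rewrite /= size_cat size_nseq /= in hs.
  right; rewrite cat_cons -!catA -cat1s.
  have hr : j %% 3 < 3 by rewrite ltn_pmod.
  case hm: (j %% 3) hr => [|[|[|r]]] // _.
  * by lr [:: true] [:: true; true] (@nil bool) [:: c].
  * by lr [:: true] [:: true] (@nil bool) [:: true; c].
  * by lr [:: true] [:: true; true; c] (@nil bool) (@nil bool).
- (* 01 0^j 1 *)
  rewrite /= size_cat size_nseq /= in hs.
  right; rewrite -!catA.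
  have hr : j %% 3 < 3 by rewrite ltn_pmod.
  case hm: (j %% 3) hr => [|[|[|r]]] // _.
  * by lr [:: false; true] [:: true] (@nil bool) [:: c].
  * by lr [:: true] [:: true] [:: false] [:: c].
  * by lr [:: false; true] [:: true; c] (@nil bool) (@nil bool).
- (* 1 0^j 10 *)
  rewrite /= size_cat size_nseq /= in hs.
  right; rewrite cat_cons -!catA -cat1s.
  have hr : j %% 3 < 3 by rewrite ltn_pmod.
  case hm: (j %% 3) hr => [|[|[|r]]] // _.
  * by lr [:: true] [:: true; false] (@nil bool) [:: c].
  * by lr [:: true] [:: true] (@nil bool) [:: false; c].
  * by lr [:: true] [:: true; false; c] (@nil bool) (@nil bool).
Qed.

Lemma G_compl w : G w -> G (compl w).
Proof. by move=> [v [hv [->|->]]]; exists v; split=> //; [right | left; rewrite complK]. Qed.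

Lemma step p c : G p -> 18 <= size p -> G (p ++ [:: c]) \/ bad (p ++ [:: c]).
Proof.
move=> [v [hv [->|->]]] hs; first exact: step0.
rewrite size_compl in hs.
have -> : compl v ++ [:: c] = compl (v ++ [:: ~~ c]) by rewrite compl_cat /compl /= negbK.
case: (step0 (~~ c) hv hs) => h; [left; exact: G_compl | right; exact: bad_compl].
Qed.

Lemma hard k w : 18 <= k -> size w = k -> ~ bad w -> G w.
Proof.
elim: k w => [|k IH] w // hk.
case: (ltngtP k 17) => [|hk'|hk']; first by lia.
  case/lastP: w => [//|p c]; rewrite size_rcons => -[hp] hb.
  have hbp : ~ bad p by move=> h; apply: hb; rewrite -cats1; apply: bad_pre.
  have gp := IH p hk' hp hbp.
  rewrite -cats1; case: (step c gp _) => //; first by rewrite hp.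
  by move=> h; exfalso; apply: hb; rewrite -cats1.
by move=> hs; apply: base; rewrite hs hk'.
Qed.

Lemma wpow1 (a : bool) k : wpow [:: a] k = nseq k a.
Proof. by rewrite /wpow; elim: k => //= k ->. Qed.

Lemma CnL_of u v n : L u -> size u = n -> (v = u \/ v = rev u) ->
  Cn L n v /\ Cn L n (compl v).
Proof.
move=> hL hs [->|->]; split; exists u; do 2 (split => //); tauto.
Qed.

Lemma G0_L v n : G0 v -> size v = n -> 18 <= n -> 3 %| n -> ~ bad v ->
  exists u, L u /\ size u = n /\ (v = u \/ v = rev u).
Proof.
move=> hv hs hn /dvdnP [q hq] hb.
case: hv => [[k ->]|[[k ->]|[[k ->]|[[i [j ->]]|[[j ->]|[[j ->]|[[j ->]|[[j ->]|[[j ->]|[[j ->]|[[j ->]|[[j ->]|[j ->]]]]]]]]]]]]] in hs hb *.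
- exists (nseq k false); split; last by split=> //; left.
  by left; exists k; rewrite wpow1.
- exists (wpow [:: false; true] k); split; last by split=> //; left.
  by right; left; exists k.
- exists (wpow [:: false; true] k ++ [:: false]); split; last by split=> //; left.
  by right; right; left; exists k.
- exists (nseq i false ++ true :: nseq j false); split; last by split=> //; left.
  by do 3 right; left; exists i, j; rewrite !wpow1.
- rewrite size_cat size_nseq /= in hs.
  exists (nseq (j - 1) false ++ [:: false; true; true]); split.
    by do 4 right; left; exists (j - 1); rewrite wpow1.
  split; first by rewrite size_cat size_nseq /=; lia.
  by left; rewrite (@nseq_splitr 1 j) -?catA //; lia.
- rewrite /= size_nseq in hs.
  exists (nseq (j - 1) false ++ [:: false; true; true]); split.
    by do 4 right; left; exists (j - 1); rewrite wpow1.
  split; first by rewrite size_cat size_nseq /=; lia.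
  case: j hs hb => [|j] hs hb; first by lia.
  by right; rewrite (_ : j.+1 - 1 = j) ?rev_cat ?rev_nseq //; lia.
- exists (nseq j false ++ [:: true; false; true]); split; last by split=> //; left.
  by do 5 right; exists j; rewrite wpow1.
- rewrite /= size_nseq in hs.
  exists (nseq j false ++ [:: true; false; true]); split.
    by do 5 right; exists j; rewrite wpow1.
  split; first by rewrite size_cat size_nseq /=; lia.
  by right; rewrite rev_cat rev_nseq.
all: exfalso; apply: hb.
all: rewrite ?size_cat /= ?size_cat ?size_nseq /= in hs.
- by rewrite -cat1s; lr [:: true] [:: true] (@nil bool) (@nil bool).
- by lr [:: true; true] [:: true] (@nil bool) (@nil bool).
- by rewrite -cat1s; lr [:: true] [:: true; true] (@nil bool) (@nil bool).
- by lr [:: false; true] [:: true] (@nil bool) (@nil bool).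
- by rewrite -cat1s; lr [:: true] [:: true; false] (@nil bool) (@nil bool).
Qed.

Lemma final n w : 18 <= n -> 3 %| n -> size w = n -> ~ bad w -> Cn L n w.
Proof.
move=> hn h3 hs hb.
have [v [hv hw]] := hard hn hs hb.
have hbv : ~ bad v.
  by case: hw hb => -> //; rewrite bad_complE.
have hsv : size v = n by case: hw hs => -> //; rewrite size_compl.
have [u [hu [hsu huv]]] := G0_L hv hsv hn h3 hbv.
have [h1 h2] := CnL_of hu hsu huv.
by case: hw => ->.
Qed.

Lemma count0_nseq (u : word) : count id u = 0 -> u = nseq (size u) false.
Proof. by elim: u => [|[] u IH] //= h; rewrite -IH. Qed.

Lemma count1_nap v : count id v <= 1 -> ~ antipower3 v.
Proof.
move=> hc [u1 [u2 [u3 [hv [s12 [s23 [n12 [n13 n23]]]]]]]].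
move: hc; rewrite hv !count_cat => hc.
case: (posnP (count id u1)) => h1.
  case: (posnP (count id u2)) => h2.
    by apply: n12; rewrite (count0_nseq h1) (count0_nseq h2) s12.
  have h3 : count id u3 = 0 by lia.
  by apply: n13; rewrite (count0_nseq h1) (count0_nseq h3) s12 s23.
have h2 : count id u2 = 0 by lia.
have h3 : count id u3 = 0 by lia.
by apply: n23; rewrite (count0_nseq h2) (count0_nseq h3) s23.
Qed.

Lemma count1_ok w : count id w <= 1 -> ~ bad w.
Proof.
move=> hc [v [[a [b hw]] hap]]; apply: (count1_nap _ hap).
by move: hc; rewrite hw !count_cat; lia.
Qed.

Definition altP (v : word) := exists b, forall t, t < size v -> nth false v t = odd t (+) b.

Lemma alt_nap v : altP v -> ~ antipower3 v.
Proof.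
move=> [b hb] [u1 [u2 [u3 [hv [s12 [s23 [n12 [n13 n23]]]]]]]].
apply: n13; apply: (@eq_from_nth _ false); first by rewrite s12.
move=> t ht.
have hs : size v = 3 * size u1 by rewrite hv !size_cat -s23 -s12; lia.
have e1 : nth false u1 t = nth false v t by rewrite hv nth_cat ht.
have e3 : nth false u3 t = nth false v (size u1 + size u2 + t).
  by rewrite hv !nth_cat; repeat case: ifP; rewrite ?size_cat; try lia; move=> *; congr nth; lia.
rewrite e1 e3 !hb; try lia.
Qed.

Lemma alt_factor v w : factor v w -> altP w -> altP v.
Proof.
move=> [a [s ->]] [b hb]; exists (odd (size a) (+) b) => t ht.
have h1 : size a + t < size (a ++ v ++ s) by rewrite !size_cat; lia.
have := hb _ h1.
have -> : nth false (a ++ v ++ s) (size a + t) = nth false v t.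
  by rewrite nth_cat (_ : size a + t < size a = false) ?addKn ?nth_cat ?ht //; lia.
by move=> ->; rewrite oddD addbA [odd t (+) _]addbC.
Qed.

Lemma alt_wpow' k t : t < 2 * k -> nth false (wpow [:: false; true] k) t = odd t.
Proof.
elim: k t => [|k IH] t; first by rewrite muln0 ltn0.
rewrite /wpow /= -/(wpow _ _).
case: t => [|[|t]] //= ht.
rewrite IH //; lia.
Qed.

Lemma alt_wpow k : altP (wpow [:: false; true] k).
Proof.
exists false => t; rewrite size_wpow addbF => ht; apply: alt_wpow'; move: ht; rewrite /=; lia.
Qed.

Lemma alt_wpow0 k : altP (wpow [:: false; true] k ++ [:: false]).
Proof.
exists false => t; rewrite size_cat size_wpow /= addbF nth_cat size_wpow /= => ht.
case: ltnP => h.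
  by rewrite alt_wpow' //; lia.
have -> : t = 2 * k by lia.
by rewrite subnn /= mul2n odd_double.
Qed.

Lemma bad_badb w : bad w -> badb w.
Proof.
move=> [v [[a [s hw]] hap]]; apply/hasP; exists (size a).
  by rewrite mem_iota add0n ltnS hw size_cat leq_addr.
apply/hasP; exists (size v).
  by rewrite mem_iota add0n ltnS hw !size_cat; lia.
by rewrite hw drop_size_cat // take_size_cat //; apply/ap_apb.
Qed.

Lemma take_nseq_cat n m (t : word) : n <= m -> take n (nseq m false ++ t) = nseq n false.
Proof. by move=> h; rewrite (@nseq_split m n) // -catA take_size_cat ?size_nseq. Qed.

Lemma bad_of v a s : antipower3 v -> bad (a ++ v ++ s).
Proof. by move=> h; exists v; split=> //; exists a, s. Qed.

Lemma zeros_t (t : word) m : size t <= 3 -> ~ bad (nseq 6 false ++ t) ->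
  ~ bad (nseq m false ++ t).
Proof.
move=> ht hb0 [v [[a [s hw]] hap]].
have hap' := hap.
move: hap' => [u1 [u2 [u3 [hv [s12 [s23 [n12 _]]]]]]].
have hsz := congr1 size hw; rewrite !size_cat size_nseq hv !size_cat in hsz.
case: (leqP 3 (size u1)) => hl.
  apply: n12.
  have := congr1 (take (size a + size u1 + size u2)) hw.
  rewrite take_nseq_cat; last by lia.
  have -> : a ++ v ++ s = (a ++ u1 ++ u2) ++ (u3 ++ s) by rewrite hv -!catA.
  rewrite take_size_cat; last by rewrite !size_cat addnA.
  move/(congr1 (count id)); rewrite count_nseq !count_cat mul0n => hc.
  have h1 : count id u1 = 0 by lia.
  have h2 : count id u2 = 0 by lia.
  by rewrite (count0_nseq h1) (count0_nseq h2) s12.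
apply: hb0.
have hsv : size v <= 6 by rewrite hv !size_cat; lia.
case: (leqP (size a) m) => ham.
  have : drop (size a) (nseq m false ++ t) = v ++ s by rewrite hw drop_size_cat.
  rewrite drop_cat size_nseq.
  case: ltnP => ham'; last first.
    have -> : size a = m by lia.
    rewrite subnn drop0 => ->.
    by apply: bad_of.
  rewrite drop_nseq => e.
  case: (leqP (m - size a) 6) => hd.
    rewrite (@nseq_split 6 (6 - (m - size a))) ?leq_subr // -catA.
    rewrite (_ : 6 - (6 - (m - size a)) = m - size a); last by lia.
    by rewrite e; apply: bad_of.
  have := congr1 (take (size v)) e.
  rewrite take_nseq_cat; last by lia.
  rewrite take_size_cat //.
  move=> ev; apply: bad_pre; rewrite (@nseq_split 6 (size v)) // ev.
  by rewrite -[v ++ _]cat0s; apply: bad_of.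
have : t = drop m (a ++ v ++ s) by rewrite -hw drop_size_cat ?size_nseq.
rewrite drop_cat (_ : m < size a = true); last by lia.
by move=> ->; rewrite catA; apply: bad_of.
Qed.

Lemma alt_ok w : altP w -> ~ bad w.
Proof. by move=> h [v [hf hap]]; apply: (alt_nap (alt_factor hf h) hap). Qed.

Lemma L_ok u : L u -> ~ bad u.
Proof.
case=> [[k ->]|[[k ->]|[[k ->]|[[i [j ->]]|[[k ->]|[k ->]]]]]].
- by apply: count1_ok; rewrite wpow1 count_nseq.
- exact/alt_ok/alt_wpow.
- exact/alt_ok/alt_wpow0.
- by apply: count1_ok; rewrite !wpow1 !count_cat !count_nseq.
- rewrite wpow1; apply: zeros_t => // /bad_badb; by vm_compute.
- rewrite wpow1; apply: zeros_t => // /bad_badb; by vm_compute.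
Qed.

Theorem theorem4 (n : nat) :
  18 <= n -> 3 %| n ->
  forall w : word, A n w <-> Cn L n w.
Proof.
move=> hn h3 w; split.
  by move=> [hs hb]; apply: final.
move=> [v [hL [hs hw]]].
have hb := L_ok hL.
case: hw => [->|[->|[->|->]]]; split; rewrite ?size_compl ?size_rev //.
- by move/bad_complE.
- by move/bad_revE.
- by move/bad_complE/bad_revE.
Qed.
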